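(* An idempotent semiring $S$ satisfies the identity $x+xyx+x\approx x$ if and only if it satisfies the identity $xz+xyz+xz\approx xz$.
   Context: An idempotent semiring is an algebra $(S,+,\cdot)$ with two binary operations such that $(S,+)$ and $(S,\cdot)$ are bands (associative, with $x+x=x$ and $xx=x$), and both distributive laws $x(y+z)=xy+xz$ and $(x+y)z=xz+yz$ hold; addition is not assumed commutative. *)

(* Defs.v *)
(* An idempotent semiring: (S,+) and (S,.) are bands (associative and
   idempotent), both distributive laws hold; + is NOT assumed commutative. *)
Definition is_idempotent_semiring (S : Type) (add mul : S -> S -> S) : Prop :=
  (forall x y z, add x (add y z) = add (add x y) z) /\
  (forall x, add x x = x) /\
  (forall x y z, mul x (mul y z) = mul (mul x y) z) /\
  (forall x, mul x x = x) /\
  (forall x y z, mul x (add y z) = add (mul x y) (mul x z)) /\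
  (forall x y z, mul (add x y) z = add (mul x z) (mul y z)).

(* Main.v *)
Require Import Defs.
From Stdlib Require Import Setoid.

Lemma band_lem (S : Type) (add : S -> S -> S)
  (aA : forall x y z, add x (add y z) = add (add x y) z)
  (aI : forall x, add x x = x) :
  forall a p b q, add (add (add (add a p) b) q) a = a -> add (add a b) a = a.
Proof.
  intros a p b q H.
  pose (g := add (add b q) a).
  assert (Ha : add (add a p) g = a). { unfold g. rewrite !aA. exact H. }
  assert (Hg : add a g = a).
  { rewrite <- Ha at 1. rewrite <- aA. rewrite aI. exact Ha. }
  transitivity (add (add a b) (add a g)). { rewrite Hg. reflexivity. }
  transitivity (add (add (add (add a b) (add a b)) q) a).
  { unfold g; rewrite !aA; reflexivity. }
  rewrite aI.
  transitivity (add a g); [unfold g; rewrite !aA; reflexivity | exact Hg].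
Qed.

Theorem lemma2p4 (S : Type) (add mul : S -> S -> S) :
  is_idempotent_semiring S add mul ->
  ((forall x y : S, add (add x (mul (mul x y) x)) x = x) <->
   (forall x y z : S,
      add (add (mul x z) (mul (mul x y) z)) (mul x z) = mul x z)).
Proof.
  intros [aA [aI [mA [mI [dl dr]]]]].
  split.
  - intros H x y z.
    pose proof (f_equal (fun u => mul (mul x u) z) (H (add x z) y)) as h.
    simpl in h.
    assert (mzz : forall a b, mul (mul a b) b = mul a b).
    { intros a b. rewrite <- mA, mI. reflexivity. }
    repeat rewrite ?dl, ?dr, ?mA, ?mI, ?mzz, ?aA in h.
    repeat rewrite ?aA, ?aI in h.
    eapply (band_lem S add aA aI _
      (add (mul (mul (mul x y) x) z) (mul (mul (mul (mul x z) y) x) z)) _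
      (add (mul (mul (mul x z) y) z) (mul x z))).
    rewrite !aA. exact h.
  - intros G x y. pose proof (G x y x) as h. rewrite !mI in h. exact h.
Qed.
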